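(* Let $k$ be a kernel on a space $\mathcal X$, let $x_1,\dots,x_n \in \mathcal X$, let $\hat{\mathbb P}_n = \frac1n\sum_i\delta_{x_i}$, and let $K$ be the kernel matrix $K_{ij} = k(x_i,x_j)$, assumed invertible. Let $\ell_f:\mathcal X\to\mathbb R$ and let $\vec\ell \in \mathbb R^n$ have entries $\vec\ell_i = \ell_f(x_i)$. Let $\epsilon>0$ and consider the problem $$\sup_{w\in\mathbb R^n} \sum_{i=1}^n w_i \ell_f(x_i) \quad\text{s.t.}\quad d_{\mathrm{MMD}}\Big(\sum_{i=1}^n w_i\delta_{x_i}, \hat{\mathbb P}_n\Big) \leq \epsilon,\ \ \sum_{i=1}^n w_i = 1,\ \ w_i \geq 0\ \forall i.$$ If $\epsilon$ is small enough that the constraints $w_i \geq 0$ are not active, then the optimal value of this problem is $$\mathbb{E}_{x\sim\hat{\mathbb P}_n}[\ell_f(x)] + \epsilon\sqrt{\vec\ell^T K^{-1}\vec\ell - \frac{(\vec\ell^T K^{-1}\mathbf 1)^2}{\mathbf 1^T K^{-1}\mathbf 1}}.$$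
   Context: For weights $w$, $d_{\mathrm{MMD}}(\sum_i w_i\delta_{x_i},\hat{\mathbb P}_n) = \|\sum_i (w_i - \tfrac1n) k(x_i,\cdot)\|_{\mathcal H}$, so its square equals $(w-\frac1n\mathbf 1)^T K (w - \frac1n\mathbf 1)$. ''The constraints $w_i\ge 0$ are not active'' means the optimal value is unchanged when these constraints are dropped. $\mathbf 1$ is the all-ones vector and $\mathbb{E}_{x\sim\hat{\mathbb P}_n}[\ell_f(x)] = \frac1n\sum_i \ell_f(x_i)$. *)

(* Defs.v *)
From HB Require Import structures.
From mathcomp Require Import all_boot all_order all_algebra.
From mathcomp Require Import all_classical all_reals.
From mathcomp Require Import ereal.
Set Implicit Arguments. Unset Strict Implicit. Unset Printing Implicit Defensive.
Import Order.TTheory GRing.Theory Num.Theory.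
Local Open Scope ring_scope.

Definition is_kernel (R : realType) (X : Type) (k : X -> X -> R) : Prop :=
  (forall x y, k x y = k y x) /\
  (forall (m : nat) (y : 'I_m -> X) (c : 'I_m -> R),
      0 <= \sum_(i < m) \sum_(j < m) c i * c j * k (y i) (y j)).

Definition kmat (R : realType) (X : Type) (k : X -> X -> R) (n : nat)
  (x : 'I_n -> X) : 'M[R]_n := \matrix_(i, j) k (x i) (x j).

Definition ones (R : realType) (n : nat) : 'cV[R]_n := const_mx 1.

(* d_MMD(sum_i w_i delta_{x_i}, empirical measure) = sqrt((w - 1/n)^T K (w - 1/n)) *)
Definition dMMD (R : realType) (X : Type) (k : X -> X -> R) (n : nat)
  (x : 'I_n -> X) (w : 'cV[R]_n) : R :=
  let v := w - n%:R^-1 *: ones R n in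
  Num.sqrt (((v^T *m kmat k x) *m v) 0 0).

Definition objective (R : realType) (X : Type) (n : nat) (x : 'I_n -> X)
  (l : X -> R) (w : 'cV[R]_n) : R := \sum_(i < n) w i 0 * l (x i).

Definition feas_free (R : realType) (X : Type) (k : X -> X -> R) (n : nat)
  (x : 'I_n -> X) (eps : R) : set 'cV[R]_n :=
  [set w | dMMD k x w <= eps /\ \sum_(i < n) w i 0 = 1].

Definition feas (R : realType) (X : Type) (k : X -> X -> R) (n : nat)
  (x : 'I_n -> X) (eps : R) : set 'cV[R]_n :=
  [set w | dMMD k x w <= eps /\ \sum_(i < n) w i 0 = 1 /\ forall i, 0 <= w i 0].

Definition optval (R : realType) (X : Type) (n : nat) (x : 'I_n -> X)
  (l : X -> R) (F : set 'cV[R]_n) : \bar R :=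
  ereal_sup [set (objective x l w)%:E | w in F].

(* Main.v *)
Require Import Defs.
From HB Require Import structures.
From mathcomp Require Import all_boot all_order all_algebra.
From mathcomp Require Import all_classical all_reals.
From mathcomp Require Import ereal.
From mathcomp Require Import ring lra.
Import Order.TTheory GRing.Theory Num.Theory.
Local Open Scope ring_scope.

Section Aux.
Context {R : realType} {n : nat}.
Implicit Types (p q r : 'cV[R]_n) (M : 'M[R]_n).

Definition dot p q : R := (p^T *m q) 0 0.

Lemma dotC p q : dot p q = dot q p.
Proof.
rewrite /dot. have E : (p^T *m q) 0 0 = ((p^T *m q)^T) 0 0 by rewrite [RHS]mxE. rewrite E.
by rewrite trmx_mul trmxK.
Qed.

Lemma dot_sum p q : dot p q = \sum_i p i 0 * q i 0.
Proof. by rewrite /dot mxE; apply: eq_bigr => i _; rewrite mxE. Qed.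
Lemma dotBl p q r : dot (p - q) r = dot p r - dot q r.
Proof. rewrite !dot_sum -sumrB; apply: eq_bigr => i _; by rewrite !mxE mulrBl. Qed.
Lemma dotDl p q r : dot (p + q) r = dot p r + dot q r.
Proof. rewrite !dot_sum -big_split; apply: eq_bigr => i _; by rewrite !mxE mulrDl. Qed.
Lemma dotZl s p r : dot (s *: p) r = s * dot p r.
Proof. rewrite !dot_sum mulr_sumr; apply: eq_bigr => i _; by rewrite !mxE; ring. Qed.
Lemma dotBr p q r : dot r (p - q) = dot r p - dot r q.
Proof. by rewrite dotC dotBl !(dotC r). Qed.
Lemma dotDr p q r : dot r (p + q) = dot r p + dot r q.
Proof. by rewrite dotC dotDl !(dotC r). Qed.
Lemma dotZr s p r : dot r (s *: p) = s * dot r p.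
Proof. by rewrite dotC dotZl !(dotC r). Qed.
Lemma dot_mul M p q : dot p (M *m q) = dot (M^T *m p) q.
Proof. by rewrite /dot trmx_mul trmxK mulmxA. Qed.


Lemma quad_sum M p : dot p (M *m p) = \sum_i \sum_j p i 0 * p j 0 * M i j.
Proof.
rewrite dot_sum; apply: eq_bigr => i _; rewrite mxE big_distrr /=.
by apply: eq_bigr => j _; ring.
Qed.

Lemma disc (Q r D : R) : 0 <= D -> (forall s, 0 <= Q - 2*s*r + s^+2*D) -> r^+2 <= Q*D.
Proof.
move=> D0 H.
have Q0 : 0 <= Q by have := H 0; rewrite mulr0 mul0r expr0n /= mul0r subr0 addr0.
have [D0'|Dpos] := eqVneq D 0.
  rewrite D0' mulr0.
  have [->|rn0] := eqVneq r 0; first by rewrite expr0n.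
  have := H ((Q+1) / (2*r)); rewrite D0' mulr0 addr0.
  have -> : 2 * ((Q + 1) / (2 * r)) * r = Q + 1 by field; rewrite ?rn0 ?andbT ?pnatr_eq0.
  lra.
have Dp : 0 < D by rewrite lt_def Dpos D0.
have := H (r / D).
have -> : Q - 2 * (r / D) * r + (r / D) ^+ 2 * D = Q - r^+2 / D by field; rewrite gt_eqF.
rewrite subr_ge0 ler_pdivrMr //.
Qed.
End Aux.

Theorem lemma3 (R : realType) (X : Type) (k : X -> X -> R) (n : nat)
  (x : 'I_n -> X) (l : X -> R) (eps : R) :
  is_kernel k -> (0 < n)%N ->
  kmat k x \in unitmx ->
  0 < eps ->
  optval x l (feas k x eps) = optval x l (feas_free k x eps) ->
  let K := kmat k x in
  let lv : 'cV[R]_n := \col_i l (x i) in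
  let o := ones R n in
  optval x l (feas k x eps) =
    (n%:R^-1 * \sum_(i < n) l (x i)
     + eps * Num.sqrt (((lv^T *m invmx K) *m lv) 0 0
                       - (((lv^T *m invmx K) *m o) 0 0) ^+ 2
                         / (((o^T *m invmx K) *m o) 0 0)))%:E.
Proof.
move=> [ksym kpsd] n0 HK eps0 Hopt K lv o; rewrite Hopt.
have Hsym : K^T = K by apply/matrixP => i j; rewrite !mxE ksym.
set A := invmx K.
have HA : A^T = A by rewrite /A trmx_inv Hsym.
have HKA : K *m A = 1%:M by rewrite /A mulmxV.
have KAp : forall p : 'cV[R]_n, K *m (A *m p) = p by move=> p; rewrite mulmxA HKA mul1mx.
have psd : forall p : 'cV[R]_n, 0 <= dot p (K *m p).
  move=> p; rewrite quad_sum /K /kmat.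
  under eq_bigr => i _ do under eq_bigr => j _ do rewrite mxE.
  exact: kpsd.
have Bsym : forall p q : 'cV[R]_n, dot p (K *m q) = dot q (K *m p).
  by move=> p q; rewrite dot_mul Hsym dotC.
have Aswap : forall p q : 'cV[R]_n, dot p (A *m q) = dot q (A *m p).
  by move=> p q; rewrite dot_mul HA dotC.
have Bexp : forall (p q : 'cV[R]_n) s, dot (p - s *: q) (K *m (p - s *: q)) =
    dot p (K *m p) - 2 * s * dot p (K *m q) + s ^+ 2 * dot q (K *m q).
  move=> p q s; rewrite mulmxBr -scalemxAr !dotBl !dotBr !dotZl !dotZr (Bsym q p); ring.
have cs : forall p q : 'cV[R]_n, dot p (K *m q) ^+ 2 <= dot p (K *m p) * dot q (K *m q).
  move=> p q; apply: disc; first exact: psd.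
  by move=> s; rewrite -Bexp; apply: psd.
rewrite -!mulmxA -/(dot lv (A *m lv)) -/(dot lv (A *m o)) -/(dot o (A *m o)).
set a := dot lv (A *m lv); set b := dot lv (A *m o); set c := dot o (A *m o).
have doo : dot o o = n%:R.
  rewrite dot_sum (eq_bigr (fun _ => 1)); last by move=> i _; rewrite !mxE mulr1.
  by rewrite sumr_const card_ord.
have nR0 : n%:R != 0 :> R by rewrite pnatr_eq0 -lt0n.
have cpos : 0 < c.
  have := cs o (A *m o); rewrite KAp doo (dotC (A *m o)) -/c.
  have := psd (A *m o); rewrite KAp dotC -/c => c0.
  rewrite lt_def c0 andbT; apply: contraTneq => ->; rewrite mulr0 -ltNge.
  by rewrite exprn_gt0 // ltr0n.
set t := b / c.
set g := lv - t *: o.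
set D := a - b ^+ 2 / c.
have doAl : dot o (A *m lv) = b by rewrite Aswap.
have oAg : dot o (A *m g) = 0.
  by rewrite /g mulmxBr -scalemxAr dotBr dotZr doAl -/c /t; field; rewrite gt_eqF.
have gAg : dot g (A *m g) = D.
  rewrite {1}/g dotBl dotZl oAg mulr0 subr0 /g mulmxBr -scalemxAr dotBr dotZr -/a -/b.
  by rewrite /D /t; field; rewrite gt_eqF.
have BD : dot (A *m g) (K *m (A *m g)) = D by rewrite KAp dotC.
have D0 : 0 <= D by rewrite -BD psd.
set u := n%:R^-1 *: o.
have obj : forall w : 'cV[R]_n, objective x l w = dot lv w.
  move=> w; rewrite /objective dot_sum; apply: eq_bigr => i _; by rewrite !mxE mulrC.
have sumw : forall w : 'cV[R]_n, \sum_(i < n) w i 0 = dot o w.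
  move=> w; rewrite dot_sum; apply: eq_bigr => i _; by rewrite !mxE mul1r.
have lu : dot lv u = n%:R^-1 * \sum_(i < n) l (x i).
  rewrite /u dotZr dot_sum; congr (_ * _); apply: eq_bigr => i _; by rewrite !mxE mulr1.
have ou : dot o u = 1 by rewrite /u dotZr doo mulVf.
have dM : forall w : 'cV[R]_n, dMMD k x w = Num.sqrt (dot (w - u) (K *m (w - u))).
  by move=> w; rewrite /dMMD -mulmxA.
rewrite -lu.
apply/eqP; rewrite eq_le; apply/andP; split.
- apply: ge_ereal_sup => _ [w [Hd Hs] <-]; rewrite lee_fin obj.
  set v := w - u.
  have wv : w = u + v by rewrite /v addrC subrK.
  have ov : dot o v = 0 by rewrite /v dotBr -sumw Hs ou subrr.
  have Bvq : dot v (K *m (A *m g)) = dot lv v.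
    by rewrite KAp /g dotBr dotZr (dotC v o) ov mulr0 subr0 dotC.
  have Q0 := psd v.
  have Qe : dot v (K *m v) <= eps ^+ 2.
    move: Hd; rewrite dM -/v => Hd.
    have sq := sqr_sqrtr Q0; have s0 := sqrtr_ge0 (dot v (K *m v)); nra.
  have := cs v (A *m g); rewrite Bvq BD => H.
  have sD := sqr_sqrtr D0; have sD0 := sqrtr_ge0 D.
  rewrite wv dotDr lerD2l.
  have H2 : dot lv v ^+ 2 <= (eps * Num.sqrt D) ^+ 2.
    rewrite exprMn sD; apply: (le_trans H); exact: ler_wpM2r.
  have e0 : 0 <= eps * Num.sqrt D by rewrite mulr_ge0 // ltW.
  set r := dot lv v in H2 *; set e := eps * Num.sqrt D in H2 e0 *.
  nra.
- set s := eps / Num.sqrt D.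
  set w := u + s *: (A *m g).
  have vw : w - u = s *: (A *m g) by rewrite /w addrC addKr.
  have sD := sqr_sqrtr D0; have sD0 := sqrtr_ge0 D.
  have lAg : dot lv (A *m g) = D.
    by rewrite -gAg {2}/g dotBl dotZl oAg mulr0 subr0.
  apply: ereal_sup_ubound; exists w.
    split.
      rewrite dM vw -scalemxAr dotZl dotZr BD.
      have Hq : s * (s * D) <= eps ^+ 2.
        rewrite /s; have [E|Dn0] := eqVneq (Num.sqrt D) 0.
          by rewrite E invr0 mulr0 !mul0r exprn_ge0 // ltW.
        have -> : eps / Num.sqrt D * (eps / Num.sqrt D * D) = eps ^+ 2.
          by rewrite -{3}sD; field.
        by [].
      apply: (le_trans (ler_wsqrtr Hq)).
      by rewrite sqrtr_sqr ger0_norm // ltW.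
    by rewrite sumw dotDr ou dotZr oAg mulr0 addr0.
  rewrite obj /w dotDr dotZr lAg; congr (_ + _)%:E.
  rewrite /s; have [E|Dn0] := eqVneq (Num.sqrt D) 0; first by rewrite E invr0 !mulr0 mul0r.
  have -> : eps / Num.sqrt D * D = eps / Num.sqrt D * Num.sqrt D ^+ 2 by rewrite sD.
  by field.
Qed.
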